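(* Let $N\ge 2$, $n\ge1$, and let $\rho$ be a density matrix on $\mathbb{C}^N$. Then, computing $\mathcal{C}$ on the $N^{2n}$-dimensional space $(\mathbb{C}^N)^{\otimes 2n}$, $$\mathcal{C}(\rho^{\otimes n}\otimes\mathcal{I}^{\otimes n})\le n\,\frac{S(\rho)+\log_2 N}{2\log_2 N}\,D(\rho,\mathcal{I})= n\left(\frac{\mathcal{C}(\rho)}{2}+\frac{D(\rho,\mathcal{I})}{2}\right)\le n\left(\frac{\mathcal{C}(\rho)}{2}+\frac12\right).$$
   Context: For a density matrix $\rho$ (positive semidefinite, trace one) on an $N$-dimensional Hilbert space, $\mathcal{I}=\mathbb{I}/N$ is the normalized maximally mixed state. The von Neumann entropy is $S(\rho)=-\mathrm{Tr}[\rho\log_2\rho]$, and $D(\rho,\sigma)=\tfrac12\|\rho-\sigma\|_1$ is the trace distance. The Quantum Statistical Complexity Measure is $\mathcal{C}(\rho)=\frac{1}{\log_2 M}\,S(\rho)\,D(\rho,\mathbb{I}/M)$ for a state on an $M$-dimensional space. *)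

(* Defs.v *)
From Stdlib Require Import Reals ClassicalEpsilon.
Open Scope R_scope.

Record C : Type := mkC { re : R ; im : R }.
Definition C0 : C := mkC 0 0.
Definition C1 : C := mkC 1 0.
Definition RtoC (x : R) : C := mkC x 0.
Definition Cadd (a b : C) : C := mkC (re a + re b) (im a + im b).
Definition Copp (a : C) : C := mkC (- re a) (- im a).
Definition Cmul (a b : C) : C :=
  mkC (re a * re b - im a * im b) (re a * im b + im a * re b).
Definition Cconj (a : C) : C := mkC (re a) (- im a).

Fixpoint Csum (n : nat) (f : nat -> C) : C :=
  match n with O => C0 | S k => Cadd (Csum k f) (f k) end.
Fixpoint Rsum (n : nat) (f : nat -> R) : R :=
  match n with O => 0 | S k => Rsum k f + f k end.

Definition Mat := nat -> nat -> C.
Definition mmul (N : nat) (A B : Mat) : Mat :=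
  fun i j => Csum N (fun k => Cmul (A i k) (B k j)).
Definition adj (A : Mat) : Mat := fun i j => Cconj (A j i).
Definition idM : Mat := fun i j => if Nat.eqb i j then C1 else C0.
Definition Msub (A B : Mat) : Mat := fun i j => Cadd (A i j) (Copp (B i j)).
Definition Mscale (x : R) (A : Mat) : Mat := fun i j => Cmul (RtoC x) (A i j).
Definition trace (N : nat) (A : Mat) : C := Csum N (fun i => A i i).

Definition Meq (N : nat) (A B : Mat) : Prop :=
  forall i j, (i < N)%nat -> (j < N)%nat -> A i j = B i j.

Definition unitary (N : nat) (U : Mat) : Prop :=
  Meq N (mmul N U (adj U)) idM /\ Meq N (mmul N (adj U) U) idM.

Definition hermitian (N : nat) (A : Mat) : Prop := Meq N A (adj A).

Definition psd (N : nat) (A : Mat) : Prop :=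
  forall v : nat -> C,
    0 <= re (Csum N (fun i => Csum N (fun j =>
                Cmul (Cconj (v i)) (Cmul (A i j) (v j))))).

Definition density (N : nat) (rho : Mat) : Prop :=
  hermitian N rho /\ psd N rho /\ trace N rho = C1.

Definition maxmixed (N : nat) : Mat := Mscale (/ INR N) idM.

Definition kron (dB : nat) (A B : Mat) : Mat :=
  fun i j => Cmul (A (Nat.div i dB) (Nat.div j dB)) (B (Nat.modulo i dB) (Nat.modulo j dB)).

Fixpoint tpow (d : nat) (A : Mat) (n : nat) : Mat :=
  match n with O => idM | S k => kron d (tpow d A k) A end.

Definition spectral (N : nat) (A : Mat) (U : Mat) (lam : nat -> R) : Prop :=
  unitary N U /\
  Meq N A (fun i j => Csum N (fun k => Cmul (U i k) (Cmul (RtoC (lam k)) (Cconj (U j k))))).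

(* the (multiset of) eigenvalues of a Hermitian matrix, chosen by
   the spectral theorem; unspecified for non-Hermitian input *)
Definition eigs (N : nat) (A : Mat) : nat -> R :=
  epsilon (inhabits (fun _ : nat => 0)) (fun lam => exists U, spectral N A U lam).

Definition log2 (x : R) : R := ln x / ln 2.

Definition xlogx (x : R) : R := if Rle_dec x 0 then 0 else x * log2 x.

(* von Neumann entropy S(rho) = - Tr[rho log2 rho] *)
Definition vnS (N : nat) (rho : Mat) : R :=
  - Rsum N (fun i => xlogx (eigs N rho i)).

(* trace distance D(rho,sigma) = 1/2 || rho - sigma ||_1 *)
Definition tdist (N : nat) (rho sigma : Mat) : R :=
  / 2 * Rsum N (fun i => Rabs (eigs N (Msub rho sigma) i)).

Definition qscm (M : nat) (rho : Mat) : R :=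
  / log2 (INR M) * vnS M rho * tdist M rho (maxmixed M).

(* Main.v *)
Require Import Defs.
From Stdlib Require Import Reals Lra Lia Psatz ClassicalEpsilon.
Import Defs.
Open Scope R_scope.

Lemma C_eq (a b : C) : re a = re b -> im a = im b -> a = b.
Proof. destruct a, b; simpl; intros; subst; reflexivity. Qed.

Definition Csubt (a b : C) := Cadd a (Copp b).
Lemma Cring_theory : ring_theory C0 C1 Cadd Cmul Csubt Copp (@eq C).
Proof.
  constructor; intros; try destruct x; try destruct y; try destruct z;
  apply C_eq; unfold Cadd, Cmul, Copp, Csubt, C0, C1; simpl; ring.
Qed.
Add Ring Cring : Cring_theory.

Definition nsq (z : C) : R := re z * re z + im z * im z.
Ltac Csolve := intros; apply C_eq; unfold nsq; simpl; ring.

Lemma Cconj_mul a b : Cconj (Cmul a b) = Cmul (Cconj a) (Cconj b).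
Proof. Csolve. Qed.
Lemma Cconj_add a b : Cconj (Cadd a b) = Cadd (Cconj a) (Cconj b).
Proof. Csolve. Qed.
Lemma Cconj_conj a : Cconj (Cconj a) = a.
Proof. Csolve. Qed.
Lemma Cconj_RtoC x : Cconj (RtoC x) = RtoC x.
Proof. Csolve. Qed.
Lemma RtoC_mul x y : RtoC (x * y) = Cmul (RtoC x) (RtoC y).
Proof. Csolve. Qed.
Lemma RtoC_sub x y : RtoC (x - y) = Cadd (RtoC x) (Copp (RtoC y)).
Proof. Csolve. Qed.
Lemma RtoC_1 : RtoC 1 = C1. Proof. Csolve. Qed.

Lemma nsq_ge0 z : 0 <= nsq z.
Proof. unfold nsq; nra. Qed.
Lemma nsq_conj z : nsq (Cconj z) = nsq z.
Proof. unfold nsq; simpl; ring. Qed.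
Lemma Cmul_conj_l z : Cmul (Cconj z) z = RtoC (nsq z).
Proof. Csolve. Qed.

Lemma Csum_ext n f g : (forall k, (k < n)%nat -> f k = g k) -> Csum n f = Csum n g.
Proof. induction n; simpl; intros; auto. rewrite IHn, H; auto. Qed.
Lemma Rsum_ext n f g : (forall k, (k < n)%nat -> f k = g k) -> Rsum n f = Rsum n g.
Proof. induction n; simpl; intros; auto. rewrite IHn, H; auto. Qed.
Lemma Csum_add n f g : Csum n (fun k => Cadd (f k) (g k)) = Cadd (Csum n f) (Csum n g).
Proof. induction n; simpl. Csolve. rewrite IHn; ring. Qed.
Lemma Csum_mul_l n c f : Csum n (fun k => Cmul c (f k)) = Cmul c (Csum n f).
Proof. induction n; simpl. Csolve. rewrite IHn; ring. Qed.
Lemma Csum_mul_r n c f : Csum n (fun k => Cmul (f k) c) = Cmul (Csum n f) c.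
Proof. induction n; simpl. Csolve. rewrite IHn; ring. Qed.
Lemma Csum_opp n f : Csum n (fun k => Copp (f k)) = Copp (Csum n f).
Proof. induction n; simpl. Csolve. rewrite IHn; ring. Qed.
Lemma Csum_conj n f : Cconj (Csum n f) = Csum n (fun k => Cconj (f k)).
Proof. induction n; simpl. Csolve. rewrite Cconj_add, IHn; auto. Qed.
Lemma Csum_swap n m f :
  Csum n (fun i => Csum m (fun j => f i j)) = Csum m (fun j => Csum n (fun i => f i j)).
Proof.
  induction n; simpl.
  - induction m; simpl; auto. rewrite <- IHm. Csolve.
  - rewrite IHn, <- Csum_add. reflexivity.
Qed.
Lemma re_Csum n f : re (Csum n f) = Rsum n (fun k => re (f k)).
Proof. induction n; simpl; auto. rewrite IHn; auto. Qed.
Lemma im_Csum n f : im (Csum n f) = Rsum n (fun k => im (f k)).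
Proof. induction n; simpl; auto. rewrite IHn; auto. Qed.

Lemma Rsum_add n f g : Rsum n (fun k => f k + g k) = Rsum n f + Rsum n g.
Proof. induction n; simpl. ring. rewrite IHn; ring. Qed.
Lemma Rsum_mul_l n c f : Rsum n (fun k => c * f k) = c * Rsum n f.
Proof. induction n; simpl. ring. rewrite IHn; ring. Qed.
Lemma Rsum_mul_r n c f : Rsum n (fun k => f k * c) = Rsum n f * c.
Proof. induction n; simpl. ring. rewrite IHn; ring. Qed.
Lemma Rsum_const n c : Rsum n (fun _ => c) = INR n * c.
Proof. induction n. simpl; ring. simpl Rsum. rewrite IHn, S_INR; ring. Qed.
Lemma Rsum_swap n m f :
  Rsum n (fun i => Rsum m (fun j => f i j)) = Rsum m (fun j => Rsum n (fun i => f i j)).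
Proof.
  induction n; simpl.
  - induction m; simpl; auto. rewrite <- IHm. ring.
  - rewrite IHn, <- Rsum_add. reflexivity.
Qed.
Lemma Rsum_le n f g : (forall k, (k < n)%nat -> f k <= g k) -> Rsum n f <= Rsum n g.
Proof. induction n; simpl; intros. lra. apply Rplus_le_compat; auto. Qed.
Lemma Rsum_ge0 n f : (forall k, (k < n)%nat -> 0 <= f k) -> 0 <= Rsum n f.
Proof. induction n; simpl; intros. lra. assert (0 <= Rsum n f) by auto. assert (0 <= f n) by auto. lra. Qed.
Lemma Rsum_abs n f : Rabs (Rsum n f) <= Rsum n (fun k => Rabs (f k)).
Proof.
  induction n; simpl. rewrite Rabs_R0; lra.
  eapply Rle_trans. apply Rabs_triang. lra.
Qed.
Lemma Rsum_single n f i : (i < n)%nat -> (forall k, (k < n)%nat -> 0 <= f k) -> f i <= Rsum n f.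
Proof.
  induction n; intros Hi Hf. lia. simpl.
  destruct (Nat.eq_dec i n).
  - subst. assert (0 <= Rsum n f) by (apply Rsum_ge0; intros; apply Hf; lia). lra.
  - assert (f i <= Rsum n f) by (apply IHn; [lia| intros; apply Hf; lia]). assert (0 <= f n) by (apply Hf; lia). lra.
Qed.

Lemma Csum_plus a b f : Csum (a + b) f = Cadd (Csum a f) (Csum b (fun k => f (a + k)%nat)).
Proof.
  induction b; simpl. rewrite Nat.add_0_r. Csolve.
  rewrite Nat.add_succ_r. simpl. rewrite IHb. ring.
Qed.
Lemma Rsum_plus a b f : Rsum (a + b) f = Rsum a f + Rsum b (fun k => f (a + k)%nat).
Proof.
  induction b; simpl. rewrite Nat.add_0_r. ring.
  rewrite Nat.add_succ_r. simpl. rewrite IHb. ring.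
Qed.

Lemma divmod_eq d m1 m2 : (m2 < d)%nat -> ((m1 * d + m2) / d = m1 /\ (m1 * d + m2) mod d = m2)%nat.
Proof.
  intros H. split.
  - rewrite Nat.div_add_l by lia. rewrite Nat.div_small by lia. lia.
  - rewrite Nat.add_comm, Nat.Div0.mod_add. apply Nat.mod_small; auto.
Qed.

Lemma Csum_prod a b F : (0 < b)%nat ->
  Csum (a * b) (fun m => F (m / b)%nat (m mod b)%nat) = Csum a (fun i => Csum b (fun j => F i j)).
Proof.
  intros Hb. induction a; simpl. reflexivity.
  rewrite Nat.add_comm, Csum_plus, IHa. f_equal.
  apply Csum_ext; intros k Hk.
  destruct (divmod_eq b a k Hk) as [-> ->]. reflexivity.
Qed.
Lemma Rsum_prod a b F : (0 < b)%nat ->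
  Rsum (a * b) (fun m => F (m / b)%nat (m mod b)%nat) = Rsum a (fun i => Rsum b (fun j => F i j)).
Proof.
  intros Hb. induction a; simpl. reflexivity.
  rewrite Nat.add_comm, Rsum_plus, IHa. f_equal.
  apply Rsum_ext; intros k Hk.
  destruct (divmod_eq b a k Hk) as [-> ->]. reflexivity.
Qed.
Lemma Csum_mul_sums a b f g :
  Cmul (Csum a f) (Csum b g) = Csum a (fun i => Csum b (fun j => Cmul (f i) (g j))).
Proof.
  rewrite <- Csum_mul_r. apply Csum_ext; intros. rewrite <- Csum_mul_l. reflexivity.
Qed.
Lemma Rsum_mul_sums a b f g :
  Rsum a f * Rsum b g = Rsum a (fun i => Rsum b (fun j => f i * g j)).
Proof.
  rewrite <- Rsum_mul_r. apply Rsum_ext; intros. rewrite <- Rsum_mul_l. reflexivity.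
Qed.

Lemma Csum_zero n : Csum n (fun _ => C0) = C0.
Proof. induction n; simpl. auto. rewrite IHn. Csolve. Qed.
Lemma Csum_delta n i f : (i < n)%nat -> Csum n (fun k => Cmul (idM i k) (f k)) = f i.
Proof.
  induction n; intros Hi. lia. simpl. unfold idM at 2.
  destruct (Nat.eq_dec i n).
  - subst. rewrite Nat.eqb_refl.
    rewrite (Csum_ext _ _ (fun _ => C0)).
    + rewrite Csum_zero. Csolve.
    + intros k Hk. unfold idM. replace (Nat.eqb n k) with false. Csolve.
      symmetry; apply Nat.eqb_neq; lia.
  - replace (Nat.eqb i n) with false by (symmetry; apply Nat.eqb_neq; auto).
    rewrite IHn by lia. Csolve.
Qed.
Lemma idM_sym i j : idM i j = idM j i.
Proof. unfold idM. rewrite Nat.eqb_sym. reflexivity. Qed.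
Lemma Cconj_idM i j : Cconj (idM i j) = idM i j.
Proof. unfold idM; destruct (Nat.eqb i j); Csolve. Qed.

Definition ip (n : nat) (u v : nat -> C) : C := Csum n (fun i => Cmul (Cconj (u i)) (v i)).
Definition col (U : Mat) (k : nat) : nat -> C := fun i => U i k.
Definition Qf (n : nat) (A : Mat) (v : nat -> C) : C :=
  Csum n (fun i => Csum n (fun j => Cmul (Cconj (v i)) (Cmul (A i j) (v j)))).

Lemma RtoC_Rsum n f : RtoC (Rsum n f) = Csum n (fun k => RtoC (f k)).
Proof. induction n; simpl. reflexivity. rewrite <- IHn. Csolve. Qed.

Lemma Q_spec d A U lam v : spectral d A U lam ->
  Qf d A v = RtoC (Rsum d (fun k => lam k * nsq (ip d (col U k) v))).
Proof.
  intros [_ HA]. unfold Qf.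
  transitivity (Csum d (fun k => Csum d (fun i => Csum d (fun j =>
     Cmul (Cconj (v i)) (Cmul (Cmul (U i k) (Cmul (RtoC (lam k)) (Cconj (U j k)))) (v j)))))).
  - transitivity (Csum d (fun i => Csum d (fun k => Csum d (fun j =>
     Cmul (Cconj (v i)) (Cmul (Cmul (U i k) (Cmul (RtoC (lam k)) (Cconj (U j k)))) (v j)))))).
    + apply Csum_ext; intros i Hi. symmetry. rewrite Csum_swap. apply Csum_ext; intros j Hj.
      rewrite HA by auto. rewrite <- Csum_mul_r, <- Csum_mul_l. reflexivity.
    + rewrite Csum_swap. reflexivity.
  - rewrite RtoC_Rsum. apply Csum_ext; intros k Hk.
    rewrite RtoC_mul, <- Cmul_conj_l. unfold ip. rewrite Csum_conj, Csum_mul_sums.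
    rewrite <- Csum_mul_l. apply Csum_ext; intros i Hi.
    rewrite <- Csum_mul_l. apply Csum_ext; intros j Hj.
    unfold col. rewrite Cconj_mul, Cconj_conj. ring.
Qed.

Lemma re_Q_spec d A U lam v : spectral d A U lam ->
  re (Qf d A v) = Rsum d (fun k => lam k * nsq (ip d (col U k) v)).
Proof. intros H. rewrite (Q_spec _ _ _ _ v H). reflexivity. Qed.

Lemma ip_col_unit d U m k : unitary d U -> (m < d)%nat -> (k < d)%nat ->
  ip d (col U m) (col U k) = idM m k.
Proof. intros [_ H2] Hm Hk. rewrite <- (H2 m k Hm Hk). reflexivity. Qed.

Lemma nsq_idM m k : nsq (idM m k) = if Nat.eqb m k then 1 else 0.
Proof. unfold idM; destruct (Nat.eqb m k); unfold nsq; simpl; ring. Qed.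

Lemma Rsum_delta n i f : (i < n)%nat -> Rsum n (fun k => f k * (if Nat.eqb k i then 1 else 0)) = f i.
Proof.
  intros Hi. assert (H := Csum_delta n i (fun k => RtoC (f k)) Hi).
  apply (f_equal re) in H. rewrite re_Csum in H. simpl in H. rewrite <- H.
  apply Rsum_ext; intros k Hk. unfold idM. rewrite (Nat.eqb_sym k i).
  destruct (Nat.eqb i k); simpl; lra.
Qed.

Lemma spec_diag d A U lam k : spectral d A U lam -> (k < d)%nat ->
  re (Qf d A (col U k)) = lam k.
Proof.
  intros H Hk. rewrite (re_Q_spec _ _ _ _ _ H).
  rewrite <- (Rsum_delta d k lam Hk). apply Rsum_ext; intros m Hm.
  rewrite ip_col_unit by (apply H || auto). rewrite nsq_idM. reflexivity.
Qed.

Lemma parseval d U v : unitary d U ->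
  Rsum d (fun k => nsq (ip d (col U k) v)) = re (ip d v v).
Proof.
  intros [H1 _].
  assert (E : Csum d (fun k => RtoC (nsq (ip d (col U k) v))) = ip d v v).
  { transitivity (Csum d (fun k => Csum d (fun i => Csum d (fun j =>
        Cmul (Cmul (Cconj (v i)) (v j)) (Cmul (U i k) (Cconj (U j k))))))).
    - apply Csum_ext; intros k Hk. rewrite <- Cmul_conj_l. unfold ip.
      rewrite Csum_conj, Csum_mul_sums. apply Csum_ext; intros i Hi.
      apply Csum_ext; intros j Hj. unfold col. rewrite Cconj_mul, Cconj_conj. ring.
    - rewrite Csum_swap. unfold ip. apply Csum_ext; intros i Hi.
      rewrite Csum_swap.
      rewrite (Csum_ext _ _ (fun j => Cmul (idM i j) (Cmul (Cconj (v i)) (v j)))).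
      + rewrite Csum_delta by auto. reflexivity.
      + intros j Hj. rewrite Csum_mul_l. rewrite <- (H1 i j Hi Hj). unfold mmul, adj. ring. }
  rewrite <- E, re_Csum. reflexivity.
Qed.

Lemma ip_self_col d U k : unitary d U -> (k < d)%nat -> re (ip d (col U k) (col U k)) = 1.
Proof. intros H Hk. rewrite ip_col_unit by auto. unfold idM. rewrite Nat.eqb_refl. reflexivity. Qed.

Lemma nsq_ip_sym d u v : nsq (ip d u v) = nsq (ip d v u).
Proof.
  rewrite <- nsq_conj. f_equal. unfold ip. rewrite Csum_conj. apply Csum_ext; intros.
  rewrite Cconj_mul, Cconj_conj. ring.
Qed.

Lemma trace_sum d A U : unitary d U ->
  Rsum d (fun k => re (Qf d A (col U k))) = re (trace d A).
Proof.
  intros [H1 _]. rewrite <- re_Csum. f_equal. unfold Qf, trace, col.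
  rewrite Csum_swap. apply Csum_ext; intros i Hi.
  rewrite Csum_swap.
  rewrite (Csum_ext _ _ (fun j => Cmul (idM i j) (A i j))).
  - rewrite Csum_delta by auto. reflexivity.
  - intros j Hj. rewrite idM_sym. rewrite <- (H1 j i Hj Hi). unfold mmul, adj.
    rewrite <- Csum_mul_r. apply Csum_ext; intros. ring.
Qed.

Lemma spec_compare d A E p W w (g : R -> R) (P : R -> Prop) :
  spectral d A E p -> spectral d A W w ->
  (forall k, (k < d)%nat -> P (w k)) ->
  (forall (B x : nat -> R), (forall k, (k < d)%nat -> 0 <= B k) -> Rsum d B = 1 ->
     (forall k, (k < d)%nat -> P (x k)) ->
     g (Rsum d (fun k => B k * x k)) <= Rsum d (fun k => B k * g (x k))) ->
  Rsum d (fun j => g (p j)) <= Rsum d (fun k => g (w k)).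
Proof.
  intros HE HW HP HJ.
  set (B := fun j k => nsq (ip d (col W k) (col E j))).
  transitivity (Rsum d (fun j => Rsum d (fun k => B j k * g (w k)))).
  - apply Rsum_le; intros j Hj.
    rewrite <- (spec_diag _ _ _ _ _ HE Hj), (re_Q_spec _ _ _ _ _ HW).
    rewrite (Rsum_ext _ _ (fun k => B j k * w k)) by (intros; unfold B; ring).
    apply HJ; auto.
    + intros; apply nsq_ge0.
    + unfold B. rewrite parseval by apply HW. apply ip_self_col; auto. apply HE.
  - rewrite Rsum_swap. apply Req_le. apply Rsum_ext; intros k Hk.
    rewrite Rsum_mul_r. unfold B.
    rewrite (Rsum_ext _ _ (fun j => nsq (ip d (col E j) (col W k)))) by (intros; apply nsq_ip_sym).
    rewrite parseval by apply HE. rewrite ip_self_col; auto. ring. apply HW.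
Qed.

Lemma spec_nonneg d A E p v : spectral d A E p -> (forall j, (j < d)%nat -> 0 <= p j) ->
  0 <= re (Qf d A v).
Proof.
  intros H Hp. rewrite (re_Q_spec _ _ _ _ _ H). apply Rsum_ge0; intros.
  apply Rmult_le_pos; auto. apply nsq_ge0.
Qed.

Lemma spec_herm d A U lam : spectral d A U lam -> hermitian d A.
Proof.
  intros [_ HA] i j Hi Hj. unfold adj. rewrite (HA i j Hi Hj), (HA j i Hj Hi).
  rewrite Csum_conj. apply Csum_ext; intros.
  rewrite !Cconj_mul, Cconj_conj, Cconj_RtoC. ring.
Qed.

Lemma spec_sub_scalar d A U lam c : spectral d A U lam ->
  spectral d (Msub A (Mscale c idM)) U (fun k => lam k - c).
Proof.
  intros [HU HA]. split; auto. intros i j Hi Hj.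
  unfold Msub, Mscale. rewrite (HA i j Hi Hj).
  destruct HU as [H1 _]. rewrite <- (H1 i j Hi Hj). unfold mmul, adj.
  rewrite <- Csum_mul_l, <- Csum_opp, <- Csum_add. apply Csum_ext; intros.
  rewrite RtoC_sub. ring.
Qed.

Lemma spec_ext d A B U lam : Meq d A B -> spectral d A U lam -> spectral d B U lam.
Proof. intros HAB [HU HA]. split; auto. intros i j Hi Hj. rewrite <- HAB; auto. Qed.

Lemma unitary_idM d : unitary d idM.
Proof.
  split; intros i j Hi Hj; unfold mmul, adj.
  - rewrite Csum_delta by auto. rewrite Cconj_idM, idM_sym. reflexivity.
  - rewrite (Csum_ext _ _ (fun k => Cmul (idM i k) (idM k j))).
    + rewrite Csum_delta by auto. reflexivity.
    + intros. rewrite Cconj_idM, idM_sym. reflexivity.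
Qed.

Lemma spec_scale_idM d c : spectral d (Mscale c idM) idM (fun _ => c).
Proof.
  split. apply unitary_idM. intros i j Hi Hj. unfold Mscale.
  rewrite Csum_delta by auto. rewrite Cconj_idM, idM_sym. reflexivity.
Qed.

Lemma jensen_abs d (B x : nat -> R) : (forall k, (k < d)%nat -> 0 <= B k) ->
  Rabs (Rsum d (fun k => B k * x k)) <= Rsum d (fun k => B k * Rabs (x k)).
Proof.
  intros HB. eapply Rle_trans. apply Rsum_abs. apply Rsum_le; intros.
  rewrite Rabs_mult, (Rabs_pos_eq (B k)) by auto. lra.
Qed.

Lemma ln_le_sub1 y : 0 < y -> ln y <= y - 1.
Proof. intros H. pose proof (exp_ineq1_le (ln y)). rewrite exp_ln in H0 by auto. lra. Qed.
Lemma ln2_pos : 0 < ln 2.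
Proof. pose proof ln_lt_2. lra. Qed.

Lemma xlogx_pos x : 0 < x -> xlogx x = x * (ln x / ln 2).
Proof. intros H. unfold xlogx, log2. destruct (Rle_dec x 0); lra. Qed.
Lemma xlogx_nonpos x : x <= 0 -> xlogx x = 0.
Proof. intros H. unfold xlogx. destruct (Rle_dec x 0); lra. Qed.

Lemma jensen_xlogx d (B x : nat -> R) : (forall k, (k < d)%nat -> 0 <= B k) -> Rsum d B = 1 ->
  (forall k, (k < d)%nat -> 0 <= x k) ->
  xlogx (Rsum d (fun k => B k * x k)) <= Rsum d (fun k => B k * xlogx (x k)).
Proof.
  intros HB HS Hx. set (p := Rsum d (fun k => B k * x k)).
  assert (Hp0 : 0 <= p) by (apply Rsum_ge0; intros; apply Rmult_le_pos; auto).
  destruct (Rle_dec p 0) as [Hp|Hp].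
  - rewrite xlogx_nonpos by auto. apply Rsum_ge0; intros k Hk.
    assert (E : B k * x k <= p) by (apply (Rsum_single d (fun k => B k * x k)); auto;
      intros; apply Rmult_le_pos; auto).
    assert (E2 : 0 <= B k * x k) by (apply Rmult_le_pos; auto).
    assert (E3 : B k * x k = 0) by lra.
    apply Rmult_integral in E3. destruct E3 as [E3|E3].
    + rewrite E3; lra.
    + rewrite xlogx_nonpos by lra. lra.
  - assert (Hp' : 0 < p) by lra. pose proof ln2_pos as L2.
    rewrite xlogx_pos by auto.
    transitivity (Rsum d (fun k => (B k * x k) * ((ln p + 1) / ln 2) + B k * (- p / ln 2))).
    + rewrite Rsum_add, Rsum_mul_r, Rsum_mul_r. fold p. rewrite HS. apply Req_le. field. lra.
    + apply Rsum_le; intros k Hk.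
      assert (HBk := HB k Hk). assert (Hxk := Hx k Hk).
      destruct (Rle_dec (x k) 0) as [Hx0|Hx0].
      * assert (x k = 0) by lra. rewrite H, xlogx_nonpos by lra.
        assert (0 <= B k * (p / ln 2)) by (apply Rmult_le_pos; auto; apply Rlt_le, Rdiv_lt_0_compat; auto).
        replace (B k * 0 * ((ln p + 1) / ln 2) + B k * (- p / ln 2)) with (- (B k * (p / ln 2))) by (field; lra).
        lra.
      * rewrite xlogx_pos by lra.
        assert (Hl := ln_le_sub1 (p / x k) ltac:(apply Rdiv_lt_0_compat; lra)).
        unfold Rdiv in Hl. rewrite ln_mult, ln_Rinv in Hl by (try apply Rinv_0_lt_compat; lra).
        assert (K : x k * (ln p - ln (x k)) <= p - x k).
        { assert (x k * (ln p + - ln (x k)) <= x k * (p * / x k - 1)) by (apply Rmult_le_compat_l; lra).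
          replace (x k * (p * / x k - 1)) with (p - x k) in H by (field; lra). lra. }
        replace (B k * x k * ((ln p + 1) / ln 2) + B k * (- p / ln 2))
          with (B k * ((x k * ln p + x k - p) / ln 2)) by (field; lra).
        replace (B k * (x k * (ln (x k) / ln 2))) with (B k * ((x k * ln (x k)) / ln 2)) by (field; lra).
        apply Rmult_le_compat_l; auto. unfold Rdiv. apply Rmult_le_compat_r.
        apply Rlt_le, Rinv_0_lt_compat; auto. lra.
Qed.

Lemma idM_kron d i j : (0 < d)%nat ->
  idM i j = Cmul (idM (i / d)%nat (j / d)%nat) (idM (i mod d)%nat (j mod d)%nat).
Proof.
  intros Hd. unfold idM.
  destruct (Nat.eq_dec i j) as [->|Hne].
  - rewrite !Nat.eqb_refl. Csolve.
  - replace (Nat.eqb i j) with false by (symmetry; apply Nat.eqb_neq; auto).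
    destruct (Nat.eqb_spec (i / d) (j / d)) as [E1|E1];
    destruct (Nat.eqb_spec (i mod d) (j mod d)) as [E2|E2]; try Csolve.
    exfalso. apply Hne. rewrite (Nat.div_mod_eq i d), (Nat.div_mod_eq j d). lia.
Qed.

Lemma div_lt a b i : (i < a * b)%nat -> (i / b < a)%nat.
Proof. intros H. apply Nat.Div0.div_lt_upper_bound. lia. Qed.
Lemma mod_lt b i : (0 < b)%nat -> (i mod b < b)%nat.
Proof. intros H. apply Nat.mod_upper_bound. lia. Qed.

Lemma kron_spec dA dB A B U V a b : (0 < dB)%nat ->
  spectral dA A U a -> spectral dB B V b ->
  spectral (dA * dB) (kron dB A B) (kron dB U V) (fun i => a (i / dB)%nat * b (i mod dB)%nat).
Proof.
  intros Hd [[HU1 HU2] HA] [[HV1 HV2] HB].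
  split; [split|]; intros i j Hi Hj;
  pose proof (div_lt _ _ _ Hi); pose proof (div_lt _ _ _ Hj);
  pose proof (mod_lt dB i Hd); pose proof (mod_lt dB j Hd).
  - unfold mmul, adj, kron.
    rewrite (Csum_prod dA dB (fun m1 m2 => Cmul (Cmul (U (i / dB)%nat m1) (V (i mod dB)%nat m2))
        (Cconj (Cmul (U (j / dB)%nat m1) (V (j mod dB)%nat m2))))) by auto.
    rewrite (idM_kron dB i j Hd), <- (HU1 _ _ H H0), <- (HV1 _ _ H1 H2).
    unfold mmul, adj. rewrite Csum_mul_sums. apply Csum_ext; intros; apply Csum_ext; intros.
    rewrite Cconj_mul. ring.
  - unfold mmul, adj, kron.
    rewrite (Csum_prod dA dB (fun m1 m2 => Cmul (Cconj (Cmul (U m1 (i / dB)%nat) (V m2 (i mod dB)%nat)))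
        (Cmul (U m1 (j / dB)%nat) (V m2 (j mod dB)%nat)))) by auto.
    rewrite (idM_kron dB i j Hd), <- (HU2 _ _ H H0), <- (HV2 _ _ H1 H2).
    unfold mmul, adj. rewrite Csum_mul_sums. apply Csum_ext; intros; apply Csum_ext; intros.
    rewrite Cconj_mul. ring.
  - unfold kron.
    rewrite (Csum_prod dA dB (fun m1 m2 => Cmul (Cmul (U (i / dB)%nat m1) (V (i mod dB)%nat m2))
        (Cmul (RtoC (a m1 * b m2)) (Cconj (Cmul (U (j / dB)%nat m1) (V (j mod dB)%nat m2)))))) by auto.
    rewrite (HA _ _ H H0), (HB _ _ H1 H2), Csum_mul_sums.
    apply Csum_ext; intros; apply Csum_ext; intros.
    rewrite Cconj_mul, RtoC_mul. ring.
Qed.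

Fixpoint tpowv (d : nat) (a : nat -> R) (n : nat) : nat -> R :=
  match n with
  | O => fun _ => 1
  | S k => fun i => tpowv d a k (i / d)%nat * a (i mod d)%nat
  end.

Lemma pow_succ_comm d n : (d ^ S n = d ^ n * d)%nat.
Proof. simpl. lia. Qed.

Lemma tpow_spec d A U a n : (0 < d)%nat -> spectral d A U a ->
  spectral (d ^ n) (tpow d A n) (tpow d U n) (tpowv d a n).
Proof.
  intros Hd HA. induction n.
  - simpl. apply (spec_ext 1 (Mscale 1 idM)).
    + intros i j _ _. unfold Mscale. rewrite RtoC_1. ring.
    + apply spec_scale_idM.
  - rewrite pow_succ_comm. simpl. apply kron_spec; auto.
Qed.

Lemma pos_pow d n : (0 < d)%nat -> (0 < d ^ n)%nat.
Proof. intros; apply Nat.neq_0_lt_0, Nat.pow_nonzero; lia. Qed.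

Lemma tpowv_ge0 d a n : (0 < d)%nat -> (forall k, (k < d)%nat -> 0 <= a k) ->
  forall i, (i < d ^ n)%nat -> 0 <= tpowv d a n i.
Proof.
  intros Hd Ha. induction n; intros i Hi; simpl. lra.
  rewrite pow_succ_comm in Hi. apply Rmult_le_pos.
  apply IHn, div_lt; auto. apply Ha, mod_lt; auto.
Qed.

Lemma tpowv_sum d a n : (0 < d)%nat -> Rsum (d ^ n) (tpowv d a n) = (Rsum d a) ^ n.
Proof.
  intros Hd. induction n. simpl. ring.
  rewrite pow_succ_comm. simpl tpowv.
  rewrite (Rsum_prod (d ^ n) d (fun i j => tpowv d a n i * a j)) by auto.
  rewrite <- Rsum_mul_sums, IHn. simpl. ring.
Qed.

Lemma tpowv_const d c n i : tpowv d (fun _ => c) n i = c ^ n.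
Proof. revert i. induction n; intros; simpl. reflexivity. rewrite IHn. ring. Qed.

Lemma xlogx_mul x y : 0 <= x -> 0 <= y -> xlogx (x * y) = x * xlogx y + y * xlogx x.
Proof.
  intros Hx Hy. destruct (Req_dec x 0) as [->|Hx0].
  - rewrite Rmult_0_l, xlogx_nonpos by lra. ring.
  - destruct (Req_dec y 0) as [->|Hy0].
    + rewrite Rmult_0_r, xlogx_nonpos by lra. ring.
    + rewrite !xlogx_pos by (try apply Rmult_lt_0_compat; lra).
      rewrite ln_mult by lra. field. pose proof ln2_pos; lra.
Qed.

Lemma Rsum_prod_xlogx a b f g : (0 < b)%nat ->
  (forall i, (i < a)%nat -> 0 <= f i) -> (forall j, (j < b)%nat -> 0 <= g j) ->
  Rsum (a * b) (fun m => xlogx (f (m / b)%nat * g (m mod b)%nat)) =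
  Rsum b g * Rsum a (fun i => xlogx (f i)) + Rsum a f * Rsum b (fun j => xlogx (g j)).
Proof.
  intros Hb Hf Hg.
  rewrite (Rsum_prod a b (fun i j => xlogx (f i * g j))) by auto.
  rewrite (Rmult_comm (Rsum b g)).
  rewrite !Rsum_mul_sums, <- Rsum_add. apply Rsum_ext; intros i Hi.
  rewrite <- Rsum_add. apply Rsum_ext; intros j Hj. rewrite xlogx_mul by auto. ring.
Qed.

Lemma tpowv_ent d a n : (0 < d)%nat -> (forall k, (k < d)%nat -> 0 <= a k) -> Rsum d a = 1 ->
  Rsum (d ^ n) (fun i => xlogx (tpowv d a n i)) = INR n * Rsum d (fun k => xlogx (a k)).
Proof.
  intros Hd Ha Hs. induction n.
  - simpl. rewrite xlogx_pos by lra. rewrite ln_1. field. pose proof ln2_pos; lra.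
  - rewrite pow_succ_comm. simpl tpowv.
    rewrite (Rsum_prod_xlogx (d ^ n) d (tpowv d a n) a) by (auto; apply tpowv_ge0; auto).
    rewrite IHn, Hs, tpowv_sum, Hs, pow1, S_INR by auto. ring.
Qed.

Lemma Rsum_prod_absdiff a b f g h k : (0 < b)%nat ->
  Rsum (a * b) (fun m => Rabs (f (m / b)%nat * g (m mod b)%nat - h (m / b)%nat * k (m mod b)%nat)) <=
  Rsum a (fun i => Rabs (f i - h i)) * Rsum b (fun j => Rabs (g j)) +
  Rsum a (fun i => Rabs (h i)) * Rsum b (fun j => Rabs (g j - k j)).
Proof.
  intros Hb.
  rewrite (Rsum_prod a b (fun i j => Rabs (f i * g j - h i * k j))) by auto.
  rewrite !Rsum_mul_sums, <- Rsum_add. apply Rsum_le; intros i Hi.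
  rewrite <- Rsum_add. apply Rsum_le; intros j Hj.
  replace (f i * g j - h i * k j) with ((f i - h i) * g j + h i * (g j - k j)) by ring.
  eapply Rle_trans. apply Rabs_triang. rewrite !Rabs_mult. lra.
Qed.

Lemma tpowv_diff d a c n : (0 < d)%nat ->
  (forall k, (k < d)%nat -> 0 <= a k) -> Rsum d a = 1 ->
  (forall k, (k < d)%nat -> 0 <= c k) -> Rsum d c = 1 ->
  Rsum (d ^ n) (fun i => Rabs (tpowv d a n i - tpowv d c n i)) <= INR n * Rsum d (fun k => Rabs (a k - c k)).
Proof.
  intros Hd Ha Hsa Hc Hsc. induction n.
  - simpl. rewrite Rminus_diag, Rabs_R0. lra.
  - rewrite pow_succ_comm. simpl tpowv.
    eapply Rle_trans. apply Rsum_prod_absdiff; auto.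
    rewrite (Rsum_ext d (fun j => Rabs (a j)) a) by (intros; apply Rabs_pos_eq; auto).
    rewrite (Rsum_ext (d ^ n) (fun i => Rabs (tpowv d c n i)) (tpowv d c n))
      by (intros; apply Rabs_pos_eq; apply tpowv_ge0; auto).
    rewrite Hsa, tpowv_sum, Hsc, pow1 by auto. rewrite S_INR. lra.
Qed.

Module Br.
From mathcomp Require Import all_boot all_order all_algebra.
From mathcomp Require Import Rstruct complex.
Import GRing.Theory Num.Theory.
Local Open Scope ring_scope.
Local Open Scope complex_scope.
Local Open Scope sesquilinear_scope.
Definition toC (c : Defs.C) : R[i] := (re c +i* im c)%C.
Definition fromC (z : R[i]) : Defs.C := mkC (complex.Re z) (complex.Im z).
Lemma toCK z : toC (fromC z) = z. Proof. by case: z. Qed.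
Lemma toC_inj : injective toC.
Proof. by case=> a b [c d] [-> ->]. Qed.
Lemma toC_sum n f : toC (Csum n f) = \sum_(k < n) toC (f k).
Proof.
elim: n => [|n IH]; first by rewrite big_ord0.
by rewrite big_ord_recr /= -IH.
Qed.
Lemma toC_idM i j : toC (idM i j) = (i == j)%:R.
Proof.
rewrite /idM; case: (Nat.eqb_spec i j) => [->|/eqP /negbTE ->]; by rewrite ?eqxx.
Qed.
Definition ofM {d} (M : 'M[R[i]]_d) : Mat := fun i j =>
  match @insub _ (fun k => (k < d)%N) ('I_d) i, @insub _ (fun k => (k < d)%N) ('I_d) j with
  | Some i', Some j' => fromC (M i' j') | _, _ => C0 end.
Lemma ofME d (M : 'M[R[i]]_d) (i j : 'I_d) : ofM M i j = fromC (M i j).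
Proof. by rewrite /ofM !valK. Qed.
Lemma toC_mul a b : toC (Cmul a b) = toC a * toC b. Proof. by []. Qed.
Lemma toC_conj a : toC (Cconj a) = Num.conj (toC a). Proof. by []. Qed.
Lemma toC_real (z : R[i]) : z \is Num.real -> toC (RtoC (complex.Re z)) = z.
Proof.
move=> /CrealP; case: z => a b /= [] hb; congr (_ +i* _); 
change (Ropp b = b) in hb; symmetry; change (b = Rdefinitions.IZR BinNums.Z0); lra.
Qed.

Lemma herm_exists (d : nat) (A : Mat) : Defs.hermitian d A -> exists U lam, Defs.spectral d A U lam.
Proof.
move=> HA.
have ltd : forall k : 'I_d, (k < d)%coq_nat by move=> k; apply/ltP.
pose M := \matrix_(i < d, j < d) toC (A i j).
have HM : M ^t* = M.
  apply/matrixP => i j; rewrite !mxE (HA i j (ltd i) (ltd j)).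
  by rewrite toC_conj.
have Hnorm : M \is normalmx by apply/normalmxP; rewrite HM.
have Hherm : M \is hermsymmx by apply/is_hermitianmxP; rewrite expr0 scale1r HM.
pose P := spectralmx M; pose D := spectral_diag M.
have Punit : P \is unitarymx := spectral_unitarymx M.
have eqM : M = P^t* *m diag_mx D *m P.
  by rewrite -invmx_unitary //; apply/orthomx_spectralP.
have Dreal := hermitian_spectral_diag_real Hherm.
have PPt : P *m P^t* = 1%:M by apply/unitarymxP.
have PtP : P^t* *m P = 1%:M.
  have : P^t* \is unitarymx by rewrite trmxC_unitary.
  by move/unitarymxP; rewrite trmxCK.
pose lam := fun k : nat => match @insub _ (fun k => (k < d)%N) ('I_d) k with
   Some k' => complex.Re (D 0 k') | None => 0%R end.
exists (ofM (P^t*)), lam.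
have lamE : forall k : 'I_d, toC (RtoC (lam k)) = D 0 k.
  move=> k; rewrite /lam valK toC_real //.
  by move/mxOverP: Dreal => /(_ 0 k).
split; [split|].
- move=> i j hi hj; apply: toC_inj.
  have hi' : (i < d)%N by apply/ltP.
  have hj' : (j < d)%N by apply/ltP.
  rewrite toC_sum toC_idM.
  have -> : i = val (Ordinal hi') by [].
  have -> : j = val (Ordinal hj') by [].
  under eq_bigr => k _ do rewrite toC_mul /adj toC_conj !ofME !toCK.
  have := congr1 (fun X : 'M[R[i]]_d => X (Ordinal hi') (Ordinal hj')) PtP.
  rewrite !mxE /= => <-; apply: eq_bigr => k _; rewrite !mxE conjCK //.
- move=> i j hi hj; apply: toC_inj.
  have hi' : (i < d)%N by apply/ltP.
  have hj' : (j < d)%N by apply/ltP.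
  rewrite toC_sum toC_idM.
  have -> : i = val (Ordinal hi') by [].
  have -> : j = val (Ordinal hj') by [].
  under eq_bigr => k _ do rewrite toC_mul /adj toC_conj !ofME !toCK.
  have := congr1 (fun X : 'M[R[i]]_d => X (Ordinal hi') (Ordinal hj')) PPt.
  rewrite !mxE /= => <-; apply: eq_bigr => k _; rewrite !mxE conjCK // mulrC.
- move=> i j hi hj; apply: toC_inj.
  have hi' : (i < d)%N by apply/ltP.
  have hj' : (j < d)%N by apply/ltP.
  rewrite toC_sum.
  have -> : i = val (Ordinal hi') by [].
  have -> : j = val (Ordinal hj') by [].
  under eq_bigr => k _ do rewrite !toC_mul toC_conj !ofME !toCK lamE.
  have -> : toC (A (Ordinal hi') (Ordinal hj')) = M (Ordinal hi') (Ordinal hj') by rewrite mxE.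
  rewrite eqM mul_mx_diag !mxE; apply: eq_bigr => k _; rewrite !mxE conjCK mulrA //.
Qed.
End Br.



Lemma eigs_spec d A : hermitian d A -> exists U, spectral d A U (eigs d A).
Proof.
  intros H. unfold eigs.
  apply (epsilon_spec (inhabits (fun _ : nat => 0)) (fun lam => exists U, spectral d A U lam)).
  destruct (Br.herm_exists d A H) as [U [lam HU]]. exists lam, U. exact HU.
Qed.

Theorem mainTheorem6 (N n : nat) (rho : Mat)
  (hN : (2 <= N)%nat) (hn : (1 <= n)%nat) (hrho : density N rho) :
  let X := kron (N ^ n) (tpow N rho n) (tpow N (maxmixed N) n) in
  let B := INR n * ((vnS N rho + log2 (INR N)) / (2 * log2 (INR N)))
             * tdist N rho (maxmixed N) in
  qscm (N ^ (2 * n)) X <= B /\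
  B = INR n * (qscm N rho / 2 + tdist N rho (maxmixed N) / 2) /\
  INR n * (qscm N rho / 2 + tdist N rho (maxmixed N) / 2)
    <= INR n * (qscm N rho / 2 + / 2).
Proof.
  intros X B.
  destruct hrho as [Hh [Hpsd Htr]].
  assert (HN0 : (0 < N)%nat) by lia.
  assert (HNR : 2 <= INR N) by (apply (le_INR 2); auto).
  pose proof ln2_pos as L2.
  set (L := log2 (INR N)).
  assert (HL : 0 < L).
  { unfold L, log2. apply Rdiv_lt_0_compat; auto. rewrite <- ln_1. apply ln_increasing; lra. }
  assert (HnR : 1 <= INR n) by (apply (le_INR 1); auto).
  destruct (eigs_spec N rho Hh) as [U HU].
  set (mu := eigs N rho) in *.
  assert (Hmu0 : forall k, (k < N)%nat -> 0 <= mu k).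
  { intros k Hk. rewrite <- (spec_diag _ _ _ _ _ HU Hk). apply Hpsd. }
  assert (Hmu1 : Rsum N mu = 1).
  { rewrite (Rsum_ext _ _ (fun k => re (Qf N rho (col U k)))).
    - rewrite trace_sum by apply HU. rewrite Htr. reflexivity.
    - intros k Hk. symmetry. apply (spec_diag _ _ _ _ _ HU Hk). }
  set (u := fun _ : nat => / INR N).
  assert (Hu0 : forall k, (k < N)%nat -> 0 <= u k).
  { intros; unfold u; apply Rlt_le, Rinv_0_lt_compat; lra. }
  assert (Hu1 : Rsum N u = 1).
  { unfold u. rewrite Rsum_const. field. lra. }
  assert (HUs : spectral N (Msub rho (maxmixed N)) U (fun k => mu k - u k)).
  { apply spec_sub_scalar; auto. }
  destruct (eigs_spec N (Msub rho (maxmixed N)) (spec_herm _ _ _ _ HUs)) as [V HV].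
  set (nu := eigs N (Msub rho (maxmixed N))) in *.
  assert (Dnu : Rsum N (fun k => Rabs (nu k)) = Rsum N (fun k => Rabs (mu k - u k))).
  { apply Rle_antisym.
    - apply (spec_compare N (Msub rho (maxmixed N)) V nu U (fun k => mu k - u k) Rabs (fun _ => True)); auto.
      intros; apply jensen_abs; auto.
    - apply (spec_compare N (Msub rho (maxmixed N)) U (fun k => mu k - u k) V nu Rabs (fun _ => True)); auto.
      intros; apply jensen_abs; auto. }
  assert (HD : tdist N rho (maxmixed N) = / 2 * Rsum N (fun k => Rabs (mu k - u k))).
  { unfold tdist. fold nu. rewrite Dnu. reflexivity. }
  assert (HD1 : Rsum N (fun k => Rabs (mu k - u k)) <= 2).
  { eapply Rle_trans with (Rsum N (fun k => mu k + u k)).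
    - apply Rsum_le; intros k Hk. specialize (Hmu0 k Hk); specialize (Hu0 k Hk).
      unfold Rabs; destruct (Rcase_abs _); lra.
    - rewrite Rsum_add, Hmu1, Hu1. lra. }
  assert (HD0 : 0 <= Rsum N (fun k => Rabs (mu k - u k))).
  { apply Rsum_ge0; intros; apply Rabs_pos. }
  assert (HS : vnS N rho = - Rsum N (fun k => xlogx (mu k))) by reflexivity.
  assert (HS0 : 0 <= vnS N rho).
  { rewrite HS. assert (Rsum N (fun k => xlogx (mu k)) <= 0); [|lra].
    apply Rle_trans with (Rsum N (fun _ => 0)); [|rewrite Rsum_const; lra].
    apply Rsum_le; intros k Hk.
    assert (Hm1 : mu k <= 1) by (rewrite <- Hmu1; apply Rsum_single; auto).
    destruct (Rle_dec (mu k) 0). rewrite xlogx_nonpos; lra.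
    rewrite xlogx_pos by lra.
    assert (ln (mu k) <= 0) by (pose proof (ln_le_sub1 (mu k)); lra).
    assert (0 <= mu k * (- ln (mu k) / ln 2)) by (apply Rmult_le_pos; [lra|]; apply Rmult_le_pos; [lra|]; apply Rlt_le, Rinv_0_lt_compat; lra).
    replace (mu k * (ln (mu k) / ln 2)) with (- (mu k * (- ln (mu k) / ln 2))) by (field; lra). lra. }
  assert (Hq : qscm N rho = / L * vnS N rho * tdist N rho (maxmixed N)) by reflexivity.
  assert (P2 : B = INR n * (qscm N rho / 2 + tdist N rho (maxmixed N) / 2)).
  { unfold B. rewrite Hq. fold L. field. lra. }
  assert (P3 : INR n * (qscm N rho / 2 + tdist N rho (maxmixed N) / 2)
                <= INR n * (qscm N rho / 2 + / 2)).
  { apply Rmult_le_compat_l. lra. rewrite HD. lra. }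
  split; [|split; auto].
  assert (HK0 : (0 < N ^ n)%nat) by (apply pos_pow; auto).
  assert (HM : (N ^ (2 * n) = N ^ n * N ^ n)%nat) by (rewrite <- Nat.pow_add_r; f_equal; lia).
  rewrite HM.
  set (f := tpowv N mu n). set (g := tpowv N u n).
  assert (Hf0 : forall i, (i < N ^ n)%nat -> 0 <= f i) by (apply tpowv_ge0; auto).
  assert (Hg0 : forall i, (i < N ^ n)%nat -> 0 <= g i) by (apply tpowv_ge0; auto).
  assert (Hf1 : Rsum (N ^ n) f = 1) by (unfold f; rewrite tpowv_sum, Hmu1, pow1; auto).
  assert (Hg1 : Rsum (N ^ n) g = 1) by (unfold g; rewrite tpowv_sum, Hu1, pow1; auto).
  set (p := fun i => f (i / N ^ n)%nat * g (i mod N ^ n)%nat).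
  set (E := kron (N ^ n) (tpow N U n) (tpow N idM n)).
  assert (HX : spectral (N ^ n * N ^ n) X E p).
  { unfold X, E, p, f, g. apply kron_spec; auto; apply tpow_spec; auto.
    unfold maxmixed. apply spec_scale_idM. }
  assert (Hp0 : forall i, (i < N ^ n * N ^ n)%nat -> 0 <= p i).
  { intros i Hi; unfold p; apply Rmult_le_pos; [apply Hf0, (div_lt _ _ _ Hi)| apply Hg0, mod_lt; auto]. }
  destruct (eigs_spec (N ^ n * N ^ n) X (spec_herm _ _ _ _ HX)) as [W HW].
  set (om := eigs (N ^ n * N ^ n) X) in *.
  assert (Hom0 : forall k, (k < N ^ n * N ^ n)%nat -> 0 <= om k).
  { intros k Hk; rewrite <- (spec_diag _ _ _ _ _ HW Hk). apply (spec_nonneg _ _ _ _ _ HX Hp0). }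
  assert (Hent : Rsum (N ^ n * N ^ n) (fun j => xlogx (p j)) <= Rsum (N ^ n * N ^ n) (fun k => xlogx (om k))).
  { apply (spec_compare _ X E p W om xlogx (fun x => 0 <= x)); auto.
    intros; apply jensen_xlogx; auto. }
  assert (Hentp : Rsum (N ^ n * N ^ n) (fun j => xlogx (p j)) = - (INR n * vnS N rho) - INR n * L).
  { unfold p. rewrite Rsum_prod_xlogx by auto. rewrite Hf1, Hg1. unfold f, g.
    rewrite !tpowv_ent by auto. rewrite HS. unfold u. rewrite Rsum_const.
    rewrite xlogx_pos by (apply Rinv_0_lt_compat; lra). rewrite ln_Rinv by lra.
    unfold L, log2. field. lra. }
  assert (HSX : vnS (N ^ n * N ^ n) X <= INR n * vnS N rho + INR n * L).
  { unfold vnS at 1. fold om. lra. }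
  assert (HXs : spectral (N ^ n * N ^ n) (Msub X (maxmixed (N ^ n * N ^ n))) E
                  (fun i => p i - / INR (N ^ n * N ^ n))).
  { apply spec_sub_scalar; auto. }
  destruct (eigs_spec _ _ (spec_herm _ _ _ _ HXs)) as [Z HZ].
  set (ze := eigs (N ^ n * N ^ n) (Msub X (maxmixed (N ^ n * N ^ n)))) in *.
  assert (Hz1 : Rsum (N ^ n * N ^ n) (fun k => Rabs (ze k)) <=
                Rsum (N ^ n * N ^ n) (fun i => Rabs (p i - / INR (N ^ n * N ^ n)))).
  { apply (spec_compare _ (Msub X (maxmixed (N ^ n * N ^ n))) Z ze E _ Rabs (fun _ => True)); auto.
    intros; apply jensen_abs; auto. }
  assert (Hinv : forall i, / INR (N ^ n * N ^ n) = g (i / N ^ n)%nat * g (i mod N ^ n)%nat).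
  { intros. unfold g, u. rewrite !tpowv_const. rewrite mult_INR, pow_INR, Rinv_mult, pow_inv.
    reflexivity. }
  assert (Hz2 : Rsum (N ^ n * N ^ n) (fun i => Rabs (p i - / INR (N ^ n * N ^ n)))
                <= INR n * Rsum N (fun k => Rabs (mu k - u k))).
  { rewrite (Rsum_ext _ _ (fun i => Rabs (f (i / N ^ n)%nat * g (i mod N ^ n)%nat
                                       - g (i / N ^ n)%nat * g (i mod N ^ n)%nat)))
      by (intros i _; unfold p; rewrite (Hinv i); reflexivity).
    eapply Rle_trans. apply Rsum_prod_absdiff; auto.
    rewrite (Rsum_ext (N ^ n) (fun j => Rabs (g j - g j)) (fun _ => 0))
      by (intros; rewrite Rminus_diag, Rabs_R0; auto).
    rewrite (Rsum_ext (N ^ n) (fun j => Rabs (g j)) g) by (intros; apply Rabs_pos_eq; auto).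
    rewrite Hg1, Rsum_const, Rmult_0_r, Rmult_0_r, Rplus_0_r, Rmult_1_r.
    unfold f. apply tpowv_diff; auto. }
  assert (HDX : tdist (N ^ n * N ^ n) X (maxmixed (N ^ n * N ^ n)) <= INR n * tdist N rho (maxmixed N)).
  { unfold tdist at 1. fold ze. rewrite HD. lra. }
  assert (HDX0 : 0 <= tdist (N ^ n * N ^ n) X (maxmixed (N ^ n * N ^ n))).
  { unfold tdist; apply Rmult_le_pos; [lra| apply Rsum_ge0; intros; apply Rabs_pos]. }
  assert (HlogM : log2 (INR (N ^ n * N ^ n)) = 2 * INR n * L).
  { unfold L, log2. rewrite mult_INR, pow_INR, ln_mult, ln_pow by (try apply pow_lt; lra). field. lra. }
  unfold qscm. rewrite HlogM. unfold B. fold L.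
  set (SX := vnS (N ^ n * N ^ n) X) in *.
  set (DX := tdist (N ^ n * N ^ n) X (maxmixed (N ^ n * N ^ n))) in *.
  set (S := vnS N rho) in *. set (D := tdist N rho (maxmixed N)) in *.
  assert (Hc : SX * DX <= (INR n * S + INR n * L) * (INR n * D)).
  { apply Rle_trans with ((INR n * S + INR n * L) * DX).
    - apply Rmult_le_compat_r; auto.
    - apply Rmult_le_compat_l; auto. nra. }
  replace (/ (2 * INR n * L) * SX * DX) with ((SX * DX) * / (2 * INR n * L)) by (field; nra).
  replace (INR n * ((S + L) / (2 * L)) * D)
    with (((INR n * S + INR n * L) * (INR n * D)) * / (2 * INR n * L)) by (field; nra).
  apply Rmult_le_compat_r; auto. apply Rlt_le, Rinv_0_lt_compat. nra.
Qed.
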